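(* Let $\mathcal{H}$ be a real Hilbert space, $\Gamma\subseteq\mathbb{R}_{++}$ a nonempty closed interval, $A_1:\mathcal{H}\to\mathcal{H}$ maximally monotone and $L$-Lipschitz, and $A_2:\mathcal{H}\rightrightarrows\mathcal{H}$ maximally $\mu$-strongly monotone, with $\mathcal{P}:=\operatorname{zer}(A_1+A_2)\neq\emptyset$. Let $\mathcal{D}:=\operatorname{zer}(A_1^{-1}-A_2^{-1}\circ(-\mathrm{Id}))$, let $(\gamma_n)_{n\in\mathbb{N}}\subseteq\Gamma$ converge $R$-linearly to $\gamma^*\in\Gamma$, and let $T_\gamma:=\mathrm{Id}-J_{\gamma A_1}+J_{\gamma A_2}(2J_{\gamma A_1}-\mathrm{Id})$. Given $x_0\in\mathcal{H}$, set $z_0:=J_{\gamma_0A_1}x_0$ and for $n\in\mathbb{N}$ define $y_n:=J_{\gamma_nA_2}(2z_n-x_n)$, $w_n:=x_n-z_n+y_n$, $z_{n+1}:=J_{\gamma_nA_1}w_n$, $x_{n+1}:=\frac{\gamma_{n+1}}{\gamma_n}w_n+\big(1-\frac{\gamma_{n+1}}{\gamma_n}\big)z_{n+1}$. Then: (i) $(x_n)$ and $(w_n)$ converge $R$-linearly to the same point $x\in\operatorname{Fix}T_{\gamma^*}$; (ii) $(z_n)$ and $(y_n)$ converge $R$-linearly to the same point $z:=J_{\gamma^*A_1}x\in\mathcal{P}$; (iii) $\big(\frac{x_n-z_n}{\gamma_n}\big)$ and $\big(\frac{w_n-y_n}{\gamma_n}\big)$ converge $R$-linearly to $g:=\fr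ac{x-z}{\gamma^*}\in\mathcal{D}$.
   Context: $\operatorname{zer}A=\{x:0\in Ax\}$; $J_A=(\mathrm{Id}+A)^{-1}$; $A^{-1}$ is the inverse operator; $\operatorname{Fix}T=\{x:Tx=x\}$. $A_2$ is $\mu$-strongly monotone if $\langle x-y,u-v\rangle\ge\mu\|x-y\|^2$ for all $(x,u),(y,v)\in\operatorname{gra}A_2$. A sequence $(a_n)$ converges $R$-linearly to $a$ if there exist $C\ge0$, $r\in(0,1)$ with $\|a_n-a\|\le Cr^n$ for all $n$. *)

(* Defs.v *)
From HB Require Import structures.
From mathcomp Require Import all_boot all_order all_algebra.
From mathcomp Require Import all_classical all_reals all_analysis.
Set Implicit Arguments. Unset Strict Implicit. Unset Printing Implicit Defensive.
Import Order.TTheory GRing.Theory Num.Theory.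
Import numFieldNormedType.Exports.
Local Open Scope classical_set_scope.
Local Open Scope ring_scope.

(* Real Hilbert space: a complete normed space over R : realType whose norm
   comes from an inner product [ip]. *)
Definition is_inner_product (R : realType) (H : normedModType R)
  (ip : H -> H -> R) : Prop :=
  [/\ (forall x y, ip x y = ip y x),
      (forall a x y z, ip (a *: x + y) z = a * ip x z + ip y z),
      (forall x, 0 <= ip x x) &
      (forall x, `|x| ^+ 2 = ip x x)].

Definition graph_op (H : Type) (f : H -> H) : H -> set H := fun x => [set f x].

Definition op_sum (R : realType) (H : normedModType R) (A B : H -> set H)
  : H -> set H := fun x => [set a + b | a in A x & b in B x].

Definition op_inv (H : Type) (A : H -> set H) : H -> set H :=
  fun u => [set x | A x u].

Definition op_sub (R : realType) (H : normedModType R) (A B : H -> set H)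
  : H -> set H := fun x => [set a - b | a in A x & b in B x].

Definition op_compneg (R : realType) (H : normedModType R) (A : H -> set H)
  : H -> set H := fun x => A (- x).

Definition zer (R : realType) (H : normedModType R) (A : H -> set H) : set H :=
  [set x | A x 0].

Definition monotone_op (R : realType) (H : normedModType R)
  (ip : H -> H -> R) (A : H -> set H) : Prop :=
  forall x y u v, A x u -> A y v -> 0 <= ip (x - y) (u - v).

Definition strongly_monotone (R : realType) (H : normedModType R)
  (ip : H -> H -> R) (mu : R) (A : H -> set H) : Prop :=
  forall x y u v, A x u -> A y v -> mu * `|x - y| ^+ 2 <= ip (x - y) (u - v).

Definition maximally_monotone (R : realType) (H : normedModType R)
  (ip : H -> H -> R) (A : H -> set H) : Prop :=
  monotone_op ip A /\
  forall B : H -> set H, monotone_op ip B ->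
    (forall x u, A x u -> B x u) -> forall x u, B x u -> A x u.

Definition lipschitz_op (R : realType) (H : normedModType R) (L : R)
  (f : H -> H) : Prop := forall x y, `|f x - f y| <= L * `|x - y|.

(* Resolvent J_{γA} = (Id + γA)^{-1}: p = J x iff x ∈ p + γ A p.  For maximally
   monotone A and γ > 0 this is single-valued and everywhere defined; we pick
   the unique point with xget. *)
Definition resolvent (R : realType) (H : normedModType R) (g : R)
  (A : H -> set H) (x : H) : H :=
  xget 0 [set p | exists a, A p a /\ x = p + g *: a].

Definition T_op (R : realType) (H : normedModType R) (g : R)
  (A1 A2 : H -> set H) (x : H) : H :=
  x - resolvent g A1 x + resolvent g A2 (2%:R *: resolvent g A1 x - x).

Definition Fix (H : Type) (T : H -> H) : set H := [set x | T x = x].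

Definition Rlinear_cvg (R : realType) (V : normedModType R) (a : nat -> V)
  (l : V) : Prop :=
  exists C r : R, [/\ 0 <= C, 0 < r, r < 1 &
                   forall n, `|a n - l| <= C * r ^+ n].

Definition pos_closed_interval (R : realType) (G : set R) : Prop :=
  [/\ G !=set0, closed G, (forall a b c, G a -> G b -> a <= c -> c <= b -> G c)
    & (forall a, G a -> 0 < a)].

(* Main.v *)
Require Import Defs.
From HB Require Import structures.
From mathcomp Require Import all_boot all_order all_algebra.
From mathcomp Require Import all_classical all_reals all_analysis.
From mathcomp Require Import ring lra zify.
Import Order.TTheory GRing.Theory Num.Theory.
Import numFieldNormedType.Exports.
Local Open Scope classical_set_scope.
Local Open Scope ring_scope.
Set Implicit Arguments. Unset Strict Implicit. Unset Printing Implicit Defensive.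

Section IP.
Variables (R : realType) (H : normedModType R) (ip : H -> H -> R).
Hypothesis hip : is_inner_product ip.

Lemma ipC x y : ip x y = ip y x.
Proof. by case: hip. Qed.

Lemma ipDZl a x y z : ip (a *: x + y) z = a * ip x z + ip y z.
Proof. by case: hip. Qed.

Lemma ipnn x : ip x x = `|x| ^+ 2.
Proof. by case: hip => _ _ _ ->. Qed.

Lemma ip0l z : ip 0 z = 0.
Proof.
have := ipDZl 1 0 0 z; rewrite scaler0 addr0 mul1r => h; lra.
Qed.

Lemma ipDl x y z : ip (x + y) z = ip x z + ip y z.
Proof. by have := ipDZl 1 x y z; rewrite scale1r mul1r. Qed.

Lemma ipZl a x z : ip (a *: x) z = a * ip x z.
Proof. by have := ipDZl a x 0 z; rewrite addr0 ip0l addr0. Qed.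

Lemma ipNl x z : ip (- x) z = - ip x z.
Proof. by rewrite -scaleN1r ipZl mulN1r. Qed.

Lemma ipBl x y z : ip (x - y) z = ip x z - ip y z.
Proof. by rewrite ipDl ipNl. Qed.

Lemma ip0r z : ip z 0 = 0.
Proof. by rewrite ipC ip0l. Qed.

Lemma ipDr x y z : ip z (x + y) = ip z x + ip z y.
Proof. by rewrite ipC ipDl !(ipC z). Qed.

Lemma ipZr a x z : ip z (a *: x) = a * ip z x.
Proof. by rewrite ipC ipZl ipC. Qed.

Lemma ipNr x z : ip z (- x) = - ip z x.
Proof. by rewrite ipC ipNl ipC. Qed.

Lemma ipBr x y z : ip z (x - y) = ip z x - ip z y.
Proof. by rewrite ipDr ipNr. Qed.

Definition ipE := (ipDl, ipDr, ipZl, ipZr, ipNl, ipNr, ip0l, ip0r).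

Lemma sqnD x y : `|x + y| ^+ 2 = `|x| ^+ 2 + 2 * ip x y + `|y| ^+ 2.
Proof. rewrite -!ipnn !ipE (ipC y x); ring. Qed.

Lemma sqnB x y : `|x - y| ^+ 2 = `|x| ^+ 2 - 2 * ip x y + `|y| ^+ 2.
Proof. rewrite -!ipnn !ipE (ipC y x); ring. Qed.

Lemma CS x y : ip x y <= `|x| * `|y|.
Proof.
have [->|x0] := eqVneq x 0; first by rewrite ip0l normr0 mul0r.
have [->|y0] := eqVneq y 0; first by rewrite ip0r normr0 mulr0.
have hx : 0 < `|x| by rewrite normr_gt0.
have hy : 0 < `|y| by rewrite normr_gt0.
have := sqr_ge0 (Num.norm (Num.norm y *: x - Num.norm x *: y)).
rewrite sqnB !normrZ !ipE !normr_id.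
move=> h.
have hxy : 0 < `|x| * `|y| by apply: mulr_gt0.
rewrite -subr_ge0.
have : 0 <= (`|x| * `|y|) * (`|x| * `|y| - ip x y) by nra.
by rewrite pmulr_rge0.
Qed.

Lemma CSabs x y : `|ip x y| <= `|x| * `|y|.
Proof.
rewrite ler_norml CS andbT lerNl -ipNl -(normrN x); exact: CS.
Qed.

End IP.


Section Mono.
Variables (R : realType) (H : completeNormedModType R) (ip : H -> H -> R).
Hypothesis hip : is_inner_product ip.

Local Notation ipE := (ipE hip).

Lemma mm_rel (A : H -> set H) : maximally_monotone ip A ->
  forall x u, (forall y v, A y v -> 0 <= ip (x - y) (u - v)) -> A x u.
Proof.
move=> [mA maxA] x u hxu.
pose B := fun p q => A p q \/ (p = x /\ q = u).
apply: (maxA B); [| by move=> ? ? ?; left | by right].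
move=> p p' q q' [hA|[-> ->]] [hA'|[-> ->]].
- exact: mA.
- rewrite -opprB -(opprB u) (ipNl hip) (ipNr hip) opprK; exact: hxu.
- exact: hxu.
- by rewrite !subrr (ip0l hip).
Qed.

Lemma mm_ex (A : H -> set H) : maximally_monotone ip A -> exists y v, A y v.
Proof.
move=> hA; have [//|hne] := pselect (exists y v, A y v).
exists 0, 0; apply: (mm_rel hA) => y v hyv; exfalso; apply: hne; by exists y, v.
Qed.

Definition phi (y v x u : H) : R := ip x v + ip y u - ip y v.
Definition Fle (A : H -> set H) (x u : H) (c : R) := forall y v, A y v -> phi y v x u <= c.
Definition qq (x u : H) : R := (`|x| ^+ 2 + `|u| ^+ 2) / 2.

Lemma Fle_lb A : maximally_monotone ip A -> forall x u c, Fle A x u c -> ip x u <= c.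
Proof.
move=> hA x u c hF; rewrite leNgt; apply/negP => hc.
have hAxu : A x u.
  apply: (mm_rel hA) => y v hyv; have := hF y v hyv; rewrite /phi !ipE; lra.
have := hF x u hAxu; rewrite /phi; lra.
Qed.

Lemma Fle_graph A : monotone_op ip A -> forall y0 v0, A y0 v0 -> Fle A y0 v0 (ip y0 v0).
Proof.
move=> mA y0 v0 h y v hyv; have := mA y0 y v0 v h hyv; rewrite /phi !ipE; lra.
Qed.

Lemma Fle_mid A x u c x' u' c' : Fle A x u c -> Fle A x' u' c' ->
  Fle A (2^-1 *: (x + x')) (2^-1 *: (u + u')) ((c + c') / 2).
Proof.
move=> h1 h2 y v hyv; have := h1 y v hyv; have := h2 y v hyv; rewrite /phi !ipE; lra.
Qed.

Lemma Fle_conv A x u c y v t : monotone_op ip A -> Fle A x u c -> A y v ->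
  0 <= t -> t <= 1 ->
  Fle A (x + t *: (y - x)) (u + t *: (v - u)) ((1 - t) * c + t * ip y v).
Proof.
move=> mA h1 hyv t0 t1 y' v' hy'.
have h2 := Fle_graph mA hyv hy'.
have := h1 y' v' hy'; move: h2; rewrite /phi !ipE => h2 h3.
nra.
Qed.

Lemma small_t (Q K : R) : 0 <= K ->
  (forall t, 0 < t -> t <= 1 -> 0 <= t * Q + t ^+ 2 * K) -> 0 <= Q.
Proof.
move=> K0 h; have [//|Q0] := lerP 0 Q; exfalso.
have s0 : 0 < K - Q by lra.
have t0 : 0 < - Q / (K - Q) by rewrite divr_gt0 //; lra.
have t1 : - Q / (K - Q) <= 1 by rewrite ler_pdivrMr //; lra.
have := h _ t0 t1.
have -> : - Q / (K - Q) * Q + (- Q / (K - Q)) ^+ 2 * K = - (Q ^+ 2 * (- Q)) / (K - Q) ^+ 2.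
  by field; lra.
rewrite leNgt => /negP; apply; rewrite ltr_pdivrMr ?exprn_gt0 // mul0r.
have : 0 < Q ^+ 2 * - Q by apply: mulr_gt0; nra.
lra.
Qed.

End Mono.


Section Minty.
Variables (R : realType) (H : completeNormedModType R) (ip : H -> H -> R).
Hypothesis hip : is_inner_product ip.

Local Notation ipE := (ipE hip).

Ltac gen_norms := repeat match goal with |- context [@Num.norm ?K ?V ?x] =>
  let n := fresh "n" in let hn := fresh "hn" in
  move: (@normr_ge0 K V x); move: (@Num.norm K V x) => n hn end;
  repeat match goal with |- context [GRing.inv (GRing.natmul 1 ?k)] =>
  (match k with context [?v] => is_var v end);
  let n := fresh "i" in move: (GRing.inv (GRing.natmul 1 k)) => n end.

Lemma cvg_of_bound (s : nat -> H) :
  (forall k l, `|s k - s l| ^+ 2 <= 4 * (k.+1%:R^-1 + l.+1%:R^-1)) -> cvgn s.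
Proof.
move=> hb; apply: cauchy_cvg; apply/cauchyP => e e0.
have e20 : 0 < e ^+ 2 by rewrite exprn_gt0.
pose N := Num.Def.archi_bound (8 / e ^+ 2).
have hN : 8 / e ^+ 2 < N%:R by apply: archi_boundP; rewrite divr_ge0 // ltW.
exists (s N); exists N => // k /= hk.
rewrite -ball_normE /ball_ /=.
have hN1 : 8 / e ^+ 2 < N.+1%:R by apply: lt_le_trans hN _; rewrite ler_nat.
have hk1 : N.+1%:R <= k.+1%:R :> R by rewrite ler_nat ltnS.
have iN : N.+1%:R^-1 < e ^+ 2 / 8.
  rewrite -[e ^+ 2 / 8]invf_div ltf_pV2 ?posrE ?divr_gt0 //.
have ik : k.+1%:R^-1 <= N.+1%:R^-1 :> R by rewrite lef_pV2 ?posrE.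
clearbody N; rewrite -(@ltr_pXn2r _ 2) ?nnegrE ?normr_ge0 ?(ltW e0) //.
move: iN ik; have := hb N k; gen_norms; lra.
Qed.

Lemma minty0 (A : H -> set H) : maximally_monotone ip A -> exists p, A p (- p).
Proof.
move=> hA; have mA := hA.1.
pose V := [set t : R | exists x u c, Fle ip A x u c /\ t = c + qq x u].
have V0 : V !=set0.
  have [y0 [v0 h0]] := mm_ex hip hA.
  exists (ip y0 v0 + qq y0 v0), y0, v0, (ip y0 v0); split => //.
  exact: (Fle_graph hip).
have Vlb : lbound V 0.
  move=> t [x [u [c [hF ->]]]]; have := Fle_lb hip hA hF.
  have := sqr_ge0 `|x + u|; rewrite (sqnD hip) /qq; lra.
have hlb : has_lbound V by exists 0.
have hinf : has_inf V by split.
set m := inf V.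
have m_le : forall x u c, Fle ip A x u c -> m <= c + qq x u.
  by move=> x u c hF; apply: ge_inf => //; exists x, u, c.
have adh : forall k : nat, exists p : H * H * R,
    Fle ip A p.1.1 p.1.2 p.2 /\ p.2 + qq p.1.1 p.1.2 < m + k.+1%:R^-1.
  move=> k.
  have kp : 0 < k.+1%:R^-1 :> R by rewrite invr_gt0.
  have [t [x [u [c [hF ->]]]] ht] := inf_adherent kp hinf.
  by exists (x, u, c).
case: (choice adh) => f hf.
pose xs k := (f k).1.1. pose us k := (f k).1.2. pose cs k := (f k).2.
have hF k : Fle ip A (xs k) (us k) (cs k) by case: (hf k).
have hV k : cs k + qq (xs k) (us k) < m + k.+1%:R^-1 by case: (hf k).
have cb k l : `|xs k - xs l| ^+ 2 + `|us k - us l| ^+ 2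
    <= 4 * (k.+1%:R^-1 + l.+1%:R^-1).
  have := m_le _ _ _ (Fle_mid hip (hF k) (hF l)).
  rewrite /qq !normrZ ger0_norm ?invr_ge0 // !exprMn !(sqnD hip) !(ipNr hip) !normrN.
  have := hV k; have := hV l; rewrite /qq.
  have -> : (2^-1 : R) ^+ 2 = 4^-1 by field.
  gen_norms; lra.
have cx : cvgn xs.
  apply: cvg_of_bound => k l; have := cb k l; have := sqr_ge0 `|us k - us l|; gen_norms; lra.
have cu : cvgn us.
  apply: cvg_of_bound => k l; have := cb k l; have := sqr_ge0 `|xs k - xs l|; gen_norms; lra.
set xb := limn xs in cx. set ub := limn us in cu.
have key : forall y v, A y v -> phi ip y v xb ub + qq xb ub <= m.
  move=> y v hyv; apply/ler_addgt0Pr => e e0.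
  pose K := `|v| + `|xb| + `|y| + `|ub| + 1.
  have K0 : 0 < K by rewrite /K; have := normr_ge0 v; have := normr_ge0 xb;
    have := normr_ge0 y; have := normr_ge0 ub; lra.
  pose e' := e / (2 * K + 1).
  have e'0 : 0 < e' by rewrite divr_gt0 //; lra.
  have /cvgrPdist_le/(_ e' e'0) h1 := cx.
  have /cvgrPdist_le/(_ e' e'0) h2 := cu.
  case: h1 => N1 _ h1; case: h2 => N2 _ h2.
  pose N3 := Num.Def.archi_bound (e'^-1).
  have hN3 : e'^-1 < N3%:R by apply: archi_boundP; rewrite invr_ge0 ltW.
  pose k := (N1 + N2 + N3)%N.
  have d1 : `|xb - xs k| <= e' by apply: h1; rewrite /= /k; lia.
  have d2 : `|ub - us k| <= e' by apply: h2; rewrite /= /k; lia.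
  have d3 : k.+1%:R^-1 <= e'.
    rewrite invf_ple ?posrE //; apply: ltW; apply: lt_le_trans hN3 _.
    rewrite ler_nat /k; lia.
  have := hV k.
  have ex : phi ip y v xb ub = phi ip y v (xs k) (us k)
                + ip (xb - xs k) v + ip y (ub - us k).
    by rewrite /phi !ipE; ring.
  have nx : `|xs k| ^+ 2 = `|xb| ^+ 2 - 2 * ip xb (xb - xs k) + `|xb - xs k| ^+ 2.
    by rewrite -(sqnB hip) opprB addrC subrK.
  have nu : `|us k| ^+ 2 = `|ub| ^+ 2 - 2 * ip ub (ub - us k) + `|ub - us k| ^+ 2.
    by rewrite -(sqnB hip) opprB addrC subrK.
  have c1 := CS hip (xb - xs k) v. have c2 := CS hip y (ub - us k).
  have c3 := CS hip xb (xb - xs k). have c4 := CS hip ub (ub - us k).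
  have hFk := hF k y v hyv.
  have p1 : (`|v| + `|xb|) * `|xb - xs k| <= K * e'.
    apply: ler_pM; rewrite ?addr_ge0 //.
    rewrite /K; have := normr_ge0 y; have := normr_ge0 ub; gen_norms; lra.
  have p2 : (`|y| + `|ub|) * `|ub - us k| <= K * e'.
    apply: ler_pM; rewrite ?addr_ge0 //.
    rewrite /K; have := normr_ge0 v; have := normr_ge0 xb; gen_norms; lra.
  have eK : e' * (2 * K + 1) = e by rewrite /e' mulrVK // unitfE; lra.
  clearbody K e'.
  move: p1 p2 eK c1 c2 c3 c4 hFk d3; rewrite ex /qq nx nu.
  have := sqr_ge0 `|xb - xs k|; have := sqr_ge0 `|ub - us k|.
  gen_norms; nra.
pose cbar := m - qq xb ub.
have hFb : Fle ip A xb ub cbar.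
  by move=> y v hyv; have := key y v hyv; rewrite /cbar; lra.
have var : forall y v, A y v -> 0 <= ip y v - cbar + ip xb (y - xb) + ip ub (v - ub).
  move=> y v hyv.
  apply: (@small_t _ _ (qq (y - xb) (v - ub))).
    by rewrite /qq divr_ge0 // addr_ge0 // sqr_ge0.
  move=> t t0 t1.
  have := m_le _ _ _ (Fle_conv hip mA hFb hyv (ltW t0) t1).
  rewrite /qq (sqnD hip xb) (sqnD hip ub) !normrZ !(ipZr hip) ger0_norm ?(ltW t0) // !exprMn.
  rewrite /cbar /qq; clearbody m; gen_norms; nra.
have hlb' := Fle_lb hip hA hFb.
have rel : forall y v, A y v -> `|xb + ub| ^+ 2 <= ip (y - - ub) (v - - xb).
  move=> y v hyv; have := var y v hyv; move: hlb'.
  rewrite !opprK (sqnD hip) !ipE -!(ipnn hip) (ipC hip y xb) (ipC hip ub xb).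
  clearbody cbar; lra.
have hA' : A (- ub) (- xb).
  apply: (mm_rel hip hA) => y v h.
  rewrite -[- ub - y]opprB -[- xb - v]opprB (ipNl hip) (ipNr hip) opprK.
  apply: le_trans (rel y v h); exact: sqr_ge0.
have := rel _ _ hA'; rewrite !subrr (ip0l hip) => h0.
have : `|xb + ub| ^+ 2 == 0 by rewrite eq_le h0 sqr_ge0.
rewrite sqrf_eq0 normr_eq0 addr_eq0 => /eqP hu.
by exists (- ub); move: hA'; rewrite hu.
Qed.

Lemma minty (A : H -> set H) (g : R) (x : H) : maximally_monotone ip A -> 0 < g ->
  exists p a, A p a /\ x = p + g *: a.
Proof.
move=> [mA maxA] g0.
pose B := fun q v => exists a, A (q + x) a /\ v = g *: a.
have mB : monotone_op ip B.
  move=> q q' v v' [a [ha ->]] [a' [ha' ->]].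
  have := mA _ _ _ _ ha ha'.
  rewrite -scalerBr (ipZr hip) opprD addrACA subrr addr0 => h.
  by rewrite mulr_ge0 // ltW.
have maxB : maximally_monotone ip B.
  split => // C mC BC q v hC.
  pose C' := fun p u => C (p - x) (g *: u).
  have mC' : monotone_op ip C'.
    move=> p p' u u' h1 h2; have := mC _ _ _ _ h1 h2.
    rewrite -scalerBr (ipZr hip) opprD addrACA subrr addr0 => h.
    by rewrite -(pmulr_rge0 _ g0).
  have AC' : forall p u, A p u -> C' p u.
    move=> p u h; apply: BC; exists u; split => //; by rewrite subrK.
  have := maxA C' mC' AC' (q + x) (g^-1 *: v).
  rewrite /C' addrK scalerA divff ?gt_eqF // scale1r => /(_ hC) hA.
  by exists (g^-1 *: v); split => //; rewrite scalerA divff ?gt_eqF // scale1r.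
have [q [a [ha hq]]] := minty0 maxB.
exists (q + x), a; split => //.
by rewrite -hq addrAC subrr add0r.
Qed.

Lemma res_uniq (A : H -> set H) g x p a : monotone_op ip A -> 0 < g ->
  A p a -> x = p + g *: a -> resolvent g A x = p.
Proof.
move=> mA g0 ha hx; apply: xget_unique; first by exists a.
move=> p' [a' [ha' hx']].
have := mA _ _ _ _ ha' ha.
have e1 : p' - p = g *: (a - a').
  have hp' : p' = x - g *: a' by rewrite hx' addrK.
  have hp : p = x - g *: a by rewrite hx addrK.
  by rewrite hp hp' scalerBr opprB addrC addrA subrK.
rewrite e1 (ipZl hip) -[a' - a]opprB (ipNr hip) (ipnn hip) => h.
have : `|a - a'| ^+ 2 <= 0.
  by rewrite -oppr_ge0 -(pmulr_rge0 _ g0).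
rewrite (le_eqVlt _ 0) ltNge sqr_ge0 orbF sqrf_eq0 normr_eq0 subr_eq0 => /eqP ea.
by apply/eqP; rewrite -subr_eq0 e1 ea subrr scaler0.
Qed.

Lemma res_spec (A : H -> set H) g x : maximally_monotone ip A -> 0 < g ->
  exists a, A (resolvent g A x) a /\ x = resolvent g A x + g *: a.
Proof.
move=> hA g0; have [p [a [ha hx]]] := minty x hA g0.
have -> : resolvent g A x = p by exact: res_uniq hA.1 g0 ha hx.
by exists a.
Qed.



End Minty.


Ltac gen_norms := repeat match goal with |- context [@Num.norm ?K ?V ?x] =>
  let n := fresh "n" in let hn := fresh "hn" in
  move: (@normr_ge0 K V x); move: (@Num.norm K V x) => n hn end;
  repeat match goal with |- context [GRing.inv (GRing.natmul 1 ?k)] =>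
  (match k with context [?v] => is_var v end);
  let n := fresh "i" in move: (GRing.inv (GRing.natmul 1 k)) => n end.

Definition thetaf (R : realType) (gmin gmax L mu : R) : R :=
  let M := 1 + gmax * L in
  let nu := Num.min 1 (2 * gmin * mu) in
  2 * M ^+ 2 / (2 * M ^+ 2 + nu).

Lemma thetaf_bounds (R : realType) (gmin gmax L mu : R) :
  0 < gmin -> 0 <= gmax -> 0 <= L -> 0 < mu ->
  0 <= thetaf gmin gmax L mu /\ thetaf gmin gmax L mu < 1.
Proof.
move=> g0 g1 L0 m0; rewrite /thetaf.
set M := 1 + gmax * L. set nu := Num.min 1 (2 * gmin * mu).
have M1 : 1 <= M by rewrite /M lerDl mulr_ge0.
have nu0 : 0 < nu by rewrite /nu lt_min ltr01 /= !mulr_gt0.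
have d0 : 0 < 2 * M ^+ 2 + nu by have := sqr_ge0 M; lra.
split; first by rewrite divr_ge0 //; nra.
by rewrite ltr_pdivrMr // mul1r; lra.
Qed.


Section Steps.
Variables (R : realType) (H : completeNormedModType R) (ip : H -> H -> R).
Hypothesis hip : is_inner_product ip.
Local Notation ipE := (ipE hip).

Lemma dr_step (dx dz dw dy da db : H) (g gmin gmax L mu : R) :
  0 < mu -> 0 <= L -> 0 < gmin -> gmin <= g -> g <= gmax ->
  dz = dy + g *: (da + db) -> dw = dy + g *: da -> dx = dz + g *: da ->
  0 <= ip dz da -> mu * `|dy| ^+ 2 <= ip dy db -> `|da| <= L * `|dz| ->
  `|dw| ^+ 2 <= thetaf gmin gmax L mu * `|dx| ^+ 2.
Proof.
move=> m0 L0 gm0 g1 g2 ez ew ex hI hS hL.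
have g0 : 0 < g := lt_le_trans gm0 g1.
have ex' : dx = dw + g *: (da + db).
  by rewrite ex ez ew scalerDr addrAC addrA.
have idt : `|dx| ^+ 2 = `|dw| ^+ 2 + 2 * g * (ip dy db + ip dz da)
    + g ^+ 2 * `|da + db| ^+ 2.
  rewrite ex' (sqnD hip) normrZ exprMn ger0_norm ?(ltW g0) // ew ez !ipE (ipC hip db da).
  ring.
set P := `|dy|. set S := g * `|da + db|.
have hz : `|dz| <= P + S.
  by rewrite ez /S; apply: le_trans (ler_normD _ _) _; rewrite normrZ ger0_norm ?(ltW g0).
have hw : `|dw| <= P + g * `|da|.
  by rewrite ew; apply: le_trans (ler_normD _ _) _; rewrite normrZ ger0_norm ?(ltW g0).
set M := 1 + gmax * L.
have S0 : 0 <= S by rewrite /S; apply: mulr_ge0; [exact: ltW|exact: normr_ge0].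
have PS0 : 0 <= P + S := addr_ge0 (normr_ge0 _) S0.
have hw2 : `|dw| <= M * (P + S).
  have h1 : g * `|da| <= g * (L * (P + S)).
    apply: ler_wpM2l; [exact: ltW | apply: le_trans hL _; exact: ler_wpM2l].
  have h2 : g * (L * (P + S)) <= gmax * (L * (P + S)).
    by apply: ler_wpM2r => //; rewrite mulr_ge0.
  move: hw h1 h2; rewrite /M; clearbody P S; gen_norms; nra.
set nu := Num.min 1 (2 * gmin * mu).
have nu1 : nu <= 1 by rewrite /nu ge_min lexx.
have nu2 : nu <= 2 * gmin * mu by rewrite /nu ge_min lexx orbT.
have nu0 : 0 < nu by rewrite /nu lt_min ltr01 /= !mulr_gt0.
have M1 : 1 <= M.
  by rewrite /M lerDl mulr_ge0 // (le_trans (ltW gm0)) // (le_trans g1).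
have hX : nu * (P ^+ 2 + S ^+ 2) <= `|dx| ^+ 2 - `|dw| ^+ 2.
  rewrite idt.
  have : 2 * g * mu * P ^+ 2 <= 2 * g * ip dy db.
    by rewrite -mulrA ler_pM2l ?mulr_gt0 //.
  have : 2 * gmin * mu * P ^+ 2 <= 2 * g * mu * P ^+ 2.
    apply: ler_wpM2r; first exact: sqr_ge0.
    by rewrite -!mulrA ler_pM2l // ler_pM2r.
  have : nu * P ^+ 2 <= 2 * gmin * mu * P ^+ 2 by apply: ler_wpM2r => //; exact: sqr_ge0.
  have : nu * S ^+ 2 <= S ^+ 2 by rewrite ler_piMl ?sqr_ge0.
  have : 0 <= 2 * g * ip dz da by rewrite mulr_ge0 // mulr_ge0 // ltW.
  rewrite /S exprMn.
  clearbody P nu. gen_norms. nra.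
have hW : `|dw| ^+ 2 <= 2 * M ^+ 2 * (P ^+ 2 + S ^+ 2).
  have h0 : 0 <= `|dw| by [].
  have : `|dw| ^+ 2 <= (M * (P + S)) ^+ 2 by rewrite ler_pXn2r // ?nnegrE // (le_trans h0 hw2).
  have : 0 <= (P - S) ^+ 2 by apply: sqr_ge0.
  have : 0 <= M ^+ 2 by apply: sqr_ge0.
  clearbody P S M; gen_norms; nra.
rewrite /thetaf -/M -/nu.
have d0 : 0 < 2 * M ^+ 2 + nu by have := sqr_ge0 M; lra.
rewrite mulrAC ler_pdivlMr //.
have : 0 <= P ^+ 2 + S ^+ 2 by rewrite addr_ge0 // sqr_ge0.
move: hX hW; clearbody P S M nu; gen_norms; nra.
Qed.

End Steps.

Section Steps2.
Variables (R : realType) (H : completeNormedModType R) (ip : H -> H -> R).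
Hypothesis hip : is_inner_product ip.
Local Notation ipE := (ipE hip).

Lemma scale_bound (dz da : H) (g g' c : R) : 0 <= ip dz da -> 0 <= g -> 0 <= g' ->
  1 <= c -> g' <= c * g ->
  `|dz + g' *: da| ^+ 2 <= c ^+ 2 * `|dz + g *: da| ^+ 2.
Proof.
move=> hI g0 g'0 c1 hc.
rewrite !(sqnD hip) !normrZ !(ipZr hip) !ger0_norm // !exprMn.
have c2 : 1 <= c ^+ 2 by rewrite expr_ge1 // (le_trans ler01).
have h1 : g' <= c ^+ 2 * g.
  apply: le_trans hc _; apply: ler_wpM2r => //; rewrite expr2 ler_peMl //; lra.
have h2 : g' ^+ 2 <= c ^+ 2 * g ^+ 2.
  rewrite -exprMn ler_pXn2r ?nnegrE ?mulr_ge0 //; lra.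
have := sqr_ge0 `|dz|; have := sqr_ge0 `|da|.
move: h1 h2; gen_norms => h1 h2 h3 h4.
have : 0 <= (c ^+ 2 - 1) * n0 ^+ 2 by apply: mulr_ge0; lra.
have : 0 <= (c ^+ 2 * g - g') * ip dz da by apply: mulr_ge0; lra.
have : 0 <= (c ^+ 2 * g ^+ 2 - g' ^+ 2) * n ^+ 2 by apply: mulr_ge0; lra.
nra.
Qed.

Lemma part_bounds (dz da : H) (g : R) : 0 <= ip dz da -> 0 <= g ->
  `|dz| ^+ 2 <= `|dz + g *: da| ^+ 2 /\ (g * `|da|) ^+ 2 <= `|dz + g *: da| ^+ 2.
Proof.
move=> hI g0; rewrite (sqnD hip) normrZ ger0_norm // (ipZr hip) exprMn.
have := sqr_ge0 `|dz|; have := sqr_ge0 `|da|; have : 0 <= g * ip dz da by apply: mulr_ge0.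
gen_norms; split; nra.
Qed.

End Steps2.

Lemma seq_bound (R : realType) (E : nat -> R) (th d r : R) :
  0 <= th -> 0 <= d -> 0 <= r -> r < 1 -> (forall n, 0 <= E n) ->
  (forall n, E n.+1 <= (1 + d * r ^+ n) ^+ 2 * th * E n) ->
  forall n, E n <= E 0%N * expR (2 * d / (1 - r)) * th ^+ n.
Proof.
move=> th0 d0 r0 r1 E0 hE.
have r1' : 0 < 1 - r by lra.
suff h : forall n, E n <= E 0%N * th ^+ n * expR (2 * d * (1 - r ^+ n) / (1 - r)).
  move=> n; apply: le_trans (h n) _.
  rewrite mulrAC; apply: ler_wpM2r; first by rewrite exprn_ge0.
  apply: ler_wpM2l => //.
  rewrite ler_expR ler_pM2r ?invr_gt0 //.
  have : 0 <= r ^+ n by rewrite exprn_ge0.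
  have : 0 <= 2 * d by rewrite mulr_ge0.
  nra.
elim=> [|n IH]; first by rewrite expr0 subrr mulr0 mul0r expR0 !mulr1.
apply: le_trans (hE n) _.
set t := d * r ^+ n.
have t0 : 0 <= t by rewrite mulr_ge0 // exprn_ge0.
have et : (1 + t) ^+ 2 <= expR (2 * t).
  have h1 := expR_ge1Dx t.
  rewrite (_ : 2 * t = t + t); last by ring.
  rewrite expRD expr2.
  by apply: ler_pM => //; lra.
have ex : 2 * d * (1 - r ^+ n.+1) / (1 - r) = 2 * t + 2 * d * (1 - r ^+ n) / (1 - r).
  rewrite /t exprS; field; lra.
rewrite ex expRD.
have B0 : 0 <= E 0%N * th ^+ n * expR (2 * d * (1 - r ^+ n) / (1 - r)).
  by rewrite !mulr_ge0 // ?exprn_ge0 // expR_ge0.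
apply: le_trans (_ : (1 + t) ^+ 2 * th * (E 0%N * th ^+ n * expR (2 * d * (1 - r ^+ n) / (1 - r))) <= _).
  by apply: ler_wpM2l => //; rewrite mulr_ge0 // sqr_ge0.
rewrite exprS.
apply: le_trans (_ : expR (2 * t) * th * (E 0%N * th ^+ n * expR (2 * d * (1 - r ^+ n) / (1 - r))) <= _).
  by apply: ler_wpM2r => //; apply: ler_wpM2r.
rewrite le_eqVlt; apply/orP; left; apply/eqP; clearbody t; rewrite exprS; ring.
Qed.

Lemma sq_to_geo (R : realType) (a K th : R) (n : nat) :
  0 <= a -> 0 <= K -> 0 <= th -> th < 1 -> a ^+ 2 <= K * th ^+ n ->
  a <= (K + 1) * ((1 + th) / 2) ^+ n.
Proof.
move=> a0 K0 th0 th1 h.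
have rho0 : 0 <= (1 + th) / 2 by rewrite divr_ge0 //; lra.
rewrite -(@ler_pXn2r _ 2) ?nnegrE ?mulr_ge0 ?exprn_ge0 //; last by lra.
apply: le_trans h _.
rewrite exprMn -exprM mulnC exprM.
apply: ler_pM => //; first by rewrite exprn_ge0.
- by have := sqr_ge0 K; nra.
- apply: lerXn2r; rewrite ?nnegrE ?exprn_ge0 //.
  have := sqr_ge0 (1 - th); rewrite !expr2; lra.
Qed.


Lemma Gam_lb (R : realType) (Gam : set R) : closed Gam -> (forall a, Gam a -> 0 < a) ->
  exists2 e, 0 < e & forall a, Gam a -> e <= a.
Proof.
move=> Gcl Gpos; have [//|hn] := pselect (exists2 e, 0 < e & forall a, Gam a -> e <= a).
have h : forall e, 0 < e -> exists a, Gam a /\ a < e.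
  move=> e e0; apply: contrapT => hne; apply: hn; exists e => // a ga.
  have [//|ae] := lerP e a; exfalso; apply: hne; by exists a.
have : Gam 0.
  apply: Gcl => B /nbhs_ballP [e /= e0 hB].
  have [a [ga ae]] := h e e0.
  exists a; split => //; apply: hB; rewrite -ball_normE /ball_ /= sub0r normrN.
  by rewrite gtr0_norm // Gpos.
by move/Gpos; rewrite ltxx.
Qed.

Lemma rlin (R : realType) (V : normedModType R) (u : nat -> V) (l : V) (C rho : R) :
  0 <= C -> 0 < rho -> rho < 1 -> (forall n, `|u n - l| <= C * rho ^+ n) ->
  Rlinear_cvg u l.
Proof. by move=> *; exists C, rho; split. Qed.

Theorem corollary4p5 (R : realType) (H : completeNormedModType R)
  (ip : H -> H -> R) (Gam : set R) (A1 : H -> H) (A2 : H -> set H)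
  (L mu : R) (gam : nat -> R) (gs : R) (x0 : H)
  (x z y w : nat -> H) :
  is_inner_product ip ->
  pos_closed_interval Gam ->
  maximally_monotone ip (graph_op A1) ->
  lipschitz_op L A1 ->
  0 < mu ->
  maximally_monotone ip A2 ->
  strongly_monotone ip mu A2 ->
  zer (op_sum (graph_op A1) A2) !=set0 ->
  (forall n, Gam (gam n)) ->
  Gam gs ->
  Rlinear_cvg gam gs ->
  x 0%N = x0 ->
  z 0%N = resolvent (gam 0%N) (graph_op A1) x0 ->
  (forall n, y n = resolvent (gam n) A2 (2%:R *: z n - x n)) ->
  (forall n, w n = x n - z n + y n) ->
  (forall n, z n.+1 = resolvent (gam n) (graph_op A1) (w n)) ->
  (forall n, x n.+1 = (gam n.+1 / gam n) *: w n
                      + (1 - gam n.+1 / gam n) *: z n.+1) ->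
  exists xl : H,
    let zl := resolvent gs (graph_op A1) xl in
    let gl := gs^-1 *: (xl - zl) in
    [/\ Fix (T_op gs (graph_op A1) A2) xl /\
          Rlinear_cvg x xl /\ Rlinear_cvg w xl,
        zer (op_sum (graph_op A1) A2) zl /\
          Rlinear_cvg z zl /\ Rlinear_cvg y zl &
        zer (op_sub (op_inv (graph_op A1)) (op_compneg (op_inv A2))) gl /\
          Rlinear_cvg (fun n => (gam n)^-1 *: (x n - z n)) gl /\
          Rlinear_cvg (fun n => (gam n)^-1 *: (w n - y n)) gl].
Proof.
move=> hip [Gne Gcl Gconv Gpos] hA1 hL m0 hA2 hS hzer hgG hgs
  [C0 [r0 [C0ge r0pos r0lt hC0]]] hx0 hz0 hy hw hz hx.
have [gmin gmin0 hgmin] := Gam_lb Gcl Gpos.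
have gminn n : gmin <= gam n by apply: hgmin.
have gpos n : 0 < gam n by apply: Gpos.
have gspos : 0 < gs by apply: Gpos.
have gmins : gmin <= gs by apply: hgmin.
pose gmax := gs + C0.
have r0n n : r0 ^+ n <= 1 by rewrite exprn_ile1 // ltW.
have r0n0 n : 0 <= r0 ^+ n by rewrite exprn_ge0 // ltW.
have dgam n : `|gam n - gs| <= C0 * r0 ^+ n := hC0 n.
have gmaxn n : gam n <= gmax.
  have := dgam n; have := ler_norm (gam n - gs).
  have : C0 * r0 ^+ n <= C0 by rewrite ler_piMr.
  rewrite /gmax; move: (`|gam n - gs|) => t; lra.
have gmaxs : gs <= gmax by rewrite /gmax lerDl.
have mA1 := hA1.1. have mA2 := hA2.1.
case: hzer => zs [a ha [b hb hab]].
pose gst := A1 zs.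
have eb : b = - gst.
  by apply/eqP; rewrite -addr_eq0 addrC /gst -ha hab.
rewrite eb in hb.
have sp1 g v : 0 < g -> v = resolvent g (graph_op A1) v + g *: A1 (resolvent g (graph_op A1) v).
  move=> g0; have [a' [ha' hv]] := res_spec hip v hA1 g0.
  by rewrite -ha'.
pose an n := A1 (z n).
have F3 n : w n = z n.+1 + gam n *: an n.+1 by rewrite /an hz; apply: sp1.
have F1 n : x n = z n + gam n *: an n.
  case: n => [|n]; first by rewrite hx0 /an hz0; apply: sp1.
  rewrite hx F3 scalerDr scalerA scalerBl scale1r divfK ?gt_eqF //.
  by rewrite addrAC addrCA subrr addr0.
have F2 n : exists b, A2 (y n) b /\ 2%:R *: z n - x n = y n + gam n *: b.
  have [b' [hb' hv]] := res_spec hip (2%:R *: z n - x n) hA2 (gpos n).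
  by rewrite hy; exists b'.
have Fw n : w n = y n + gam n *: an n.
  by rewrite hw F1 (addrC (z n)) addrK addrC.
pose X n := x n - (zs + gam n *: gst).
pose Dw n := w n - (zs + gam n *: gst).
have gmax0 : 0 <= gmax by apply: le_trans (ltW gspos) gmaxs.
pose th := thetaf gmin gmax `|L| mu.
have [th0 th1] : 0 <= th /\ th < 1 by apply: thetaf_bounds.
have hXe n : X n = (z n - zs) + gam n *: (an n - gst).
  by rewrite /X F1 scalerBr opprD addrACA.
have hDe n : Dw n = (y n - zs) + gam n *: (an n - gst).
  by rewrite /Dw Fw scalerBr opprD addrACA.
have hDe' n : Dw n = (z n.+1 - zs) + gam n *: (an n.+1 - gst).
  by rewrite /Dw F3 scalerBr opprD addrACA.
have mono n : 0 <= ip (z n - zs) (an n - gst) by exact: (mA1 _ _ _ _ erefl erefl).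
have step1 n : `|Dw n| ^+ 2 <= th * `|X n| ^+ 2.
  have [bn [hbn hv]] := F2 n.
  have ezy : z n = y n + gam n *: (an n + bn).
    have : z n - gam n *: an n = y n + gam n *: bn.
      by rewrite -hv F1 scaler_nat mulr2n opprD addrA addrK.
    move/(congr1 (fun t => t + gam n *: an n)); rewrite subrK => ->.
    by rewrite scalerDr -addrA (addrC (gam n *: bn)).
  apply: (@dr_step _ _ _ hip (X n) (z n - zs) (Dw n) (y n - zs) (an n - gst) (bn + gst)
            (gam n) gmin gmax `|L| mu) => //.
  - by rewrite ezy addrACA addNr addr0 addrAC.
  - by have := hS _ _ _ _ hbn hb; rewrite opprK.
  - apply: le_trans (hL (z n) zs) _; apply: ler_wpM2r => //; exact: ler_norm.
pose d := 2 * C0 / gmin.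
have d0 : 0 <= d by rewrite /d divr_ge0 // ?mulr_ge0 // ltW.
have step2 n : `|X n.+1| ^+ 2 <= (1 + d * r0 ^+ n) ^+ 2 * th * `|X n| ^+ 2.
  have c1 : 1 <= 1 + d * r0 ^+ n by rewrite lerDl mulr_ge0.
  have hc : gam n.+1 <= (1 + d * r0 ^+ n) * gam n.
    have e1 : 2 * C0 * r0 ^+ n <= d * r0 ^+ n * gam n.
      have q1 : 1 <= gam n / gmin by rewrite ler_pdivlMr // mul1r.
      have -> : d * r0 ^+ n * gam n = (2 * C0 * r0 ^+ n) * (gam n / gmin).
        by rewrite /d; field; rewrite gt_eqF.
      by rewrite ler_peMr // !mulr_ge0.
    have e2 : r0 ^+ n.+1 <= r0 ^+ n by rewrite exprS ler_piMl // ltW.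
    have e3 : C0 * r0 ^+ n.+1 <= C0 * r0 ^+ n by apply: ler_wpM2l.
    have := dgam n; have := dgam n.+1; rewrite !ler_norml => /andP[h1 h2] /andP[h3 h4].
    move: e1 e3; move: (C0 * r0 ^+ n.+1) (C0 * r0 ^+ n) (d * r0 ^+ n) => p q t; nra.
  have h := scale_bound hip (mono n.+1) (ltW (gpos n)) (ltW (gpos n.+1)) c1 hc.
  rewrite hXe; apply: le_trans h _; rewrite -hDe' -mulrA.
  by apply: ler_wpM2l; [exact: sqr_ge0 | exact: step1].
have Eb := @seq_bound _ (fun n => `|X n| ^+ 2) th d r0 th0 d0 (ltW r0pos) r0lt
  (fun n => sqr_ge0 _) step2.
pose K := `|X 0%N| ^+ 2 * expR (2 * d / (1 - r0)).
have K0 : 0 <= K by rewrite /K mulr_ge0 ?sqr_ge0 ?expR_ge0.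
have hXn n : `|X n| <= (K + 1) * ((1 + th) / 2) ^+ n.
  by apply: sq_to_geo => //; exact: Eb.
pose rho := Num.max ((1 + th) / 2) r0.
have r0rho : r0 <= rho by rewrite /rho le_max lexx orbT.
have throho : (1 + th) / 2 <= rho by rewrite /rho le_max lexx.
have rho0 : 0 < rho by apply: lt_le_trans r0pos r0rho.
have rho1 : rho < 1 by rewrite /rho gt_max r0lt andbT; lra.
have th2 : 0 <= (1 + th) / 2 by rewrite divr_ge0 //; lra.
have pw1 n : ((1 + th) / 2) ^+ n <= rho ^+ n by apply: lerXn2r; rewrite ?nnegrE // ltW.
have pw2 n : r0 ^+ n <= rho ^+ n by apply: lerXn2r; rewrite ?nnegrE // ltW.
have K10 : 0 <= K + 1 by lra.
have hX n : `|X n| <= (K + 1) * rho ^+ n.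
  by apply: le_trans (hXn n) _; apply: ler_wpM2l.
have hDw n : `|Dw n| <= `|X n|.
  rewrite -(@ler_pXn2r _ 2) ?nnegrE //; apply: le_trans (step1 n) _.
  by rewrite ler_piMl ?sqr_ge0 // ltW.
have hz_ n : `|z n - zs| <= `|X n|.
  rewrite -(@ler_pXn2r _ 2) ?nnegrE // hXe.
  exact: (part_bounds hip (mono n) (ltW (gpos n))).1.
have ha_ n : gmin * `|an n - gst| <= `|X n|.
  apply: le_trans (_ : gam n * `|an n - gst| <= _).
    by apply: ler_wpM2r.
  rewrite -(@ler_pXn2r _ 2) ?nnegrE ?mulr_ge0 ?(ltW (gpos n)) // hXe.
  exact: (part_bounds hip (mono n) (ltW (gpos n))).2.
have hy_ n : `|y n - zs| <= 2 * `|X n|.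
  have -> : y n - zs = Dw n - gam n *: (an n - gst) by rewrite hDe addrK.
  apply: le_trans (ler_normB _ _) _.
  rewrite normrZ gtr0_norm //.
  have := hDw n; have := ha_ n.
  have : gam n * `|an n - gst| <= `|X n|.
    rewrite -(@ler_pXn2r _ 2) ?nnegrE ?mulr_ge0 ?(ltW (gpos n)) // hXe.
    exact: (part_bounds hip (mono n) (ltW (gpos n))).2.
  gen_norms; lra.
have hgst n : `|(gam n - gs) *: gst| <= C0 * `|gst| * rho ^+ n.
  rewrite normrZ mulrAC; apply: ler_wpM2r => //.
  apply: le_trans (dgam n) _; exact: ler_wpM2l.
pose xl := zs + gs *: gst.
have zl_eq : resolvent gs (graph_op A1) xl = zs.
  exact: (res_uniq hip mA1 gspos (erefl : graph_op A1 zs gst) erefl).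
have gl_eq : gs^-1 *: (xl - zs) = gst.
  by rewrite /xl (addrC zs) addrK scalerA mulVf ?gt_eqF // scale1r.
exists xl => zl gl.
have ezl : zl = zs := zl_eq.
have egl : gl = gst by rewrite /gl ezl gl_eq.
clearbody zl gl; subst zl gl.
split; [split; [|split] | split; [|split] | split; [|split]].
- rewrite /Fix /T_op /= zl_eq.
  have -> : resolvent gs A2 (2%:R *: zs - xl) = zs.
    apply: (res_uniq hip mA2 gspos hb).
    by rewrite /xl scaler_nat mulr2n opprD addrA addrK scalerN.
  by rewrite subrK.
- apply: (@rlin _ _ _ _ (K + 1 + C0 * `|gst|) rho) => //.
    by rewrite addr_ge0 // mulr_ge0.
  move=> n.
  have -> : x n - xl = X n + (gam n - gs) *: gst.
    by rewrite /X /xl scalerBl !opprD !addrA subrK.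
  apply: le_trans (ler_normD _ _) _; rewrite mulrDl.
  by apply: lerD; [exact: hX | exact: hgst].
- apply: (@rlin _ _ _ _ (K + 1 + C0 * `|gst|) rho) => //.
    by rewrite addr_ge0 // mulr_ge0.
  move=> n.
  have -> : w n - xl = Dw n + (gam n - gs) *: gst.
    by rewrite /Dw /xl scalerBl !opprD !addrA subrK.
  apply: le_trans (ler_normD _ _) _; rewrite mulrDl.
  by apply: lerD; [exact: le_trans (hDw n) (hX n) | exact: hgst].
- exists gst => //; exists (- gst) => //; by rewrite subrr.
- apply: (@rlin _ _ _ _ (K + 1) rho) => // n.
  exact: le_trans (hz_ n) (hX n).
- apply: (@rlin _ _ _ _ (2 * (K + 1)) rho) => //; first by rewrite mulr_ge0.
  move=> n; rewrite -mulrA; apply: le_trans (hy_ n) _.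
  by apply: ler_wpM2l => //; exact: hX.
- exists zs => //; exists zs => //; by rewrite subrr.
- apply: (@rlin _ _ _ _ ((K + 1) / gmin) rho) => //; first by rewrite divr_ge0 // ltW.
  move=> n.
  have -> : (gam n)^-1 *: (x n - z n) = an n.
    by rewrite F1 (addrC (z n)) addrK scalerA mulVf ?gt_eqF // scale1r.
  rewrite mulrAC ler_pdivlMr // mulrC.
  exact: le_trans (ha_ n) (hX n).
- apply: (@rlin _ _ _ _ ((K + 1) / gmin) rho) => //; first by rewrite divr_ge0 // ltW.
  move=> n.
  have -> : (gam n)^-1 *: (w n - y n) = an n.
    by rewrite Fw (addrC (y n)) addrK scalerA mulVf ?gt_eqF // scale1r.
  rewrite mulrAC ler_pdivlMr // mulrC.
  exact: le_trans (ha_ n) (hX n).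
Qed.
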